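(* Let $n\ge1$ and let $o_1,\dots,o_n\ge1$ be integers. For each layer $\ell=1,\dots,n$ let $H^{(\ell)}_0\in\mathbb{R}$ and $H^{(\ell)}_j:\mathbb{Z}^j\to\mathbb{R}$, $1\le j\le o_\ell$, be finitely supported kernels. For a signal $x:\mathbb{Z}\to\mathbb{R}$ define $x_0=x$ and $x_\ell=\sum_{j=0}^{o_\ell}H^{(\ell)}_j*x_{\ell-1}^j$ for $\ell=1,\dots,n$. Then $x_n$ has the form of an order-$\prod_{\ell=1}^n o_\ell$ Volterra convolution of $x$: there exist finitely supported kernels $F_k:\mathbb{Z}^k\to\mathbb{R}$, $0\le k\le\prod_{\ell=1}^n o_\ell$ ($F_0\in\mathbb{R}$), not depending on $x$, with $x_n=\sum_{k=0}^{\prod_\ell o_\ell}F_k*x^k$.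
   Context: Signals are real functions on $\mathbb{Z}$. For a kernel $H:\mathbb{Z}^n\to\mathbb{R}$ ($n\ge1$) and signals $x_1,\dots,x_n$, the order-$n$ convolution is $(H*[x_1,\dots,x_n])(t)=\sum_{(\tau_1,\dots,\tau_n)\in\mathbb{Z}^n}H(\tau_1,\dots,\tau_n)\prod_{i=1}^n x_i(t-\tau_i)$, and $H*x^n$ denotes $H*[x,\dots,x]$ ($n$ copies). For $n=0$ the kernel is a real number $H_0$ and $H_0*x^0$ is the constant signal with value $H_0$. *)

(* Defs.v *)
From HB Require Import structures.
From mathcomp Require Import all_boot all_order all_algebra.
From mathcomp Require Import reals.
Set Implicit Arguments. Unset Strict Implicit. Unset Printing Implicit Defensive.
Import Order.TTheory GRing.Theory Num.Theory.
Local Open Scope ring_scope.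

(* A point of Z^n is a finite function 'I_n -> int.  For n = 0 there is a
   single point, so an order-0 kernel is just a real number. *)
Definition zpt (n : nat) := {ffun 'I_n -> int}.

Record fkernel (R : realType) (n : nat) := FKernel {
  kfun : zpt n -> R;
  ksupp : seq (zpt n);
  ksuppP : forall tau, kfun tau != 0 -> tau \in ksupp }.

(* Order-n convolution (H * [x_1,...,x_n])(t)
   = sum_{tau in Z^n} H(tau) prod_i x_i(t - tau_i); the sum is finite
   because H is finitely supported, so we sum over the support list
   (without duplicates). *)
Definition conv (R : realType) (n : nat) (H : fkernel R n)
    (xs : 'I_n -> int -> R) (t : int) : R :=
  \sum_(tau <- undup (ksupp H)) kfun H tau * \prod_(i < n) xs i (t - tau i).

Definition powconv (R : realType) (n : nat) (H : fkernel R n)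
    (x : int -> R) : int -> R := conv H (fun _ => x).

Fixpoint layer_out (R : realType) (o : nat -> nat)
    (H : nat -> forall j : nat, fkernel R j) (x : int -> R) (l : nat)
    : int -> R :=
  match l with
  | 0 => x
  | l'.+1 => fun t => \sum_(j < (o l'.+1).+1)
                         powconv (H l'.+1 j) (layer_out o H x l') t
  end.

(* Main.v *)
Require Import Defs.
From HB Require Import structures.
From mathcomp Require Import all_boot all_order all_algebra.
From mathcomp Require Import reals.
From mathcomp Require Import ring.
Import Order.TTheory GRing.Theory Num.Theory.
Local Open Scope ring_scope.

Lemma conv_seq (R : realType) n (H : fkernel R n) xs t (s : seq (zpt n)) :
  uniq s -> {subset ksupp H <= s} ->
  conv H xs t = \sum_(tau <- s) kfun H tau * \prod_(i < n) xs i (t - tau i).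
Proof.
move=> us sub; rewrite /conv [RHS](bigID (mem (undup (ksupp H)))) /=.
rewrite [X in _ = _ + X]big1 ?addr0; last first.
  move=> tau; rewrite mem_undup => ntau.
  have [->|/ksuppP h] := eqVneq (kfun H tau) 0; first by rewrite mul0r.
  by rewrite h in ntau.
rewrite -[RHS]big_filter; apply: perm_big; apply: uniq_perm.
- exact: undup_uniq.
- exact: filter_uniq.
move=> tau; rewrite mem_filter /=; case: (boolP (tau \in undup (ksupp H))) => //.
by rewrite mem_undup => /sub ->.
Qed.

Definition kzero (R : realType) n : fkernel R n :=
  @FKernel R n (fun _ => 0) [::] (fun tau h => False_ind _ (negP h (eqxx _))).

Lemma powconv_zero (R : realType) n x t : powconv (kzero R n) x t = 0.
Proof. by rewrite /powconv /conv big_nil. Qed.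

Definition kadd (R : realType) n (A B : fkernel R n) : fkernel R n.
Proof.
refine (@FKernel R n (fun tau => kfun A tau + kfun B tau) (ksupp A ++ ksupp B) _).
move=> tau; rewrite mem_cat.
have [a0|/ksuppP -> //] := eqVneq (kfun A tau) 0.
by rewrite a0 add0r => /ksuppP ->; rewrite orbT.
Defined.
Arguments kadd {R n}.

Lemma powconv_add (R : realType) n (A B : fkernel R n) x t :
  powconv (kadd A B) x t = powconv A x t + powconv B x t.
Proof.
have U := undup_uniq (ksupp A ++ ksupp B).
rewrite /powconv !(@conv_seq _ _ _ _ _ _ U) /=; last 3 first.
- by move=> tau h; rewrite mem_undup mem_cat h orbT.
- by move=> tau h; rewrite mem_undup mem_cat h.
- by move=> tau; rewrite mem_undup.
by rewrite -big_split /=; apply: eq_bigr => tau _; rewrite mulrDl.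
Qed.

Definition kconst (R : realType) (c : R) : fkernel R 0.
Proof.
refine (@FKernel R 0 (fun _ => c) [:: [ffun i => 0]] _).
move=> tau _; rewrite inE; by apply/eqP/ffunP => -[].
Defined.
Arguments kconst {R}.

Lemma powconv_const (R : realType) (c : R) x t : powconv (kconst c) x t = c.
Proof.
rewrite /powconv (@conv_seq _ _ _ _ _ [:: [ffun i => 0]]) //.
by rewrite big_seq1 big_ord0 mulr1.
Qed.

Definition kdelta (R : realType) : fkernel R 1.
Proof.
refine (@FKernel R 1 (fun tau => if tau == [ffun i => 0] then 1 else 0) [:: [ffun i => 0]] _).
move=> tau /=; case: ifP => [/eqP -> _|_]; first by rewrite mem_seq1. by rewrite eqxx.
Defined.

Lemma powconv_delta (R : realType) x t : powconv (kdelta R) x t = x t.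
Proof.
rewrite /powconv (@conv_seq _ _ _ _ _ [:: [ffun i => 0]]) //.
by rewrite big_seq1 /= eqxx mul1r big_ord1 ffunE subr0.
Qed.

Definition zadd n (c : int) (a : zpt n) : zpt n := [ffun i => a i + c].
Definition zsub n (c : int) (a : zpt n) : zpt n := [ffun i => a i - c].

Arguments zadd {n}. Arguments zsub {n}.

Lemma zsubK n c : cancel (@zsub n c) (@zadd n c).
Proof. by move=> a; apply/ffunP => i; rewrite !ffunE subrK. Qed.
Lemma zaddK n c : cancel (@zadd n c) (@zsub n c).
Proof. by move=> a; apply/ffunP => i; rewrite !ffunE addrK. Qed.

Definition kshift (R : realType) n (c : int) (A : fkernel R n) : fkernel R n.
Proof.
refine (@FKernel R n (fun tau => kfun A (zsub c tau)) (map (zadd c) (ksupp A)) _).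
move=> tau /ksuppP h; rewrite -[tau](zsubK n c); exact: map_f.
Defined.
Arguments kshift {R n}.

Lemma powconv_shift (R : realType) n c (A : fkernel R n) x t :
  powconv (kshift c A) x t = powconv A x (t - c).
Proof.
have U : uniq (map (zadd c) (undup (ksupp A))).
  by rewrite (map_inj_uniq (can_inj (@zaddK n c))) undup_uniq.
rewrite /powconv (@conv_seq _ _ _ _ _ _ U); last first.
  by move=> tau /mapP [a ha ->]; rewrite map_f // mem_undup.
rewrite (@conv_seq _ _ _ _ _ _ (undup_uniq (ksupp A))); last by move=> tau; rewrite mem_undup.
rewrite big_map; apply: eq_bigr => a _ /=; rewrite zaddK; congr (_ * _).
by apply: eq_bigr => i _; rewrite ffunE; congr (x _); ring.
Qed.

Definition zcat k m (a : zpt k) (b : zpt m) : zpt (k + m) :=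
  [ffun i => match split i with inl i1 => a i1 | inr i2 => b i2 end].
Definition lpart k m (tau : zpt (k + m)) : zpt k := [ffun i => tau (lshift m i)].
Definition rpart k m (tau : zpt (k + m)) : zpt m := [ffun i => tau (rshift k i)].
Arguments lpart {k m}. Arguments zcat {k m}. Arguments rpart {k m}.

Lemma zcat_lshift k m a b i : @zcat k m a b (lshift m i) = a i.
Proof. by rewrite ffunE (unsplitK (inl i)). Qed.
Lemma zcat_rshift k m a b i : @zcat k m a b (rshift k i) = b i.
Proof. by rewrite ffunE (unsplitK (inr i)). Qed.
Lemma lpart_zcat k m a b : lpart (@zcat k m a b) = a.
Proof. by apply/ffunP => i; rewrite ffunE zcat_lshift. Qed.
Lemma rpart_zcat k m a b : rpart (@zcat k m a b) = b.
Proof. by apply/ffunP => i; rewrite ffunE zcat_rshift. Qed.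
Lemma zcatK k m tau : zcat (@lpart k m tau) (rpart tau) = tau.
Proof.
apply/ffunP => i; rewrite ffunE -{2}(splitK i).
by case: (split i) => j; rewrite ffunE.
Qed.

Arguments zcat_lshift {k m}. Arguments zcat_rshift {k m}. Arguments lpart_zcat {k m}. Arguments rpart_zcat {k m}. Arguments zcatK {k m}.

Definition kmul (R : realType) k m (A : fkernel R k) (B : fkernel R m) : fkernel R (k + m).
Proof.
refine (@FKernel R (k + m) (fun tau => kfun A (lpart tau) * kfun B (rpart tau))
  [seq zcat a b | a <- ksupp A, b <- ksupp B] _).
move=> tau; rewrite mulf_eq0 negb_or => /andP [/ksuppP ha /ksuppP hb].
by rewrite -(zcatK tau) allpairs_f.
Defined.
Arguments kmul {R k m}.

Lemma powconv_mul (R : realType) k m (A : fkernel R k) (B : fkernel R m) x t :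
  powconv (kmul A B) x t = powconv A x t * powconv B x t.
Proof.
have U : uniq [seq zcat a b | a <- undup (ksupp A), b <- undup (ksupp B)].
  apply: allpairs_uniq; rewrite ?undup_uniq //.
  move=> [a b] [a' b'] _ _ /= e.
  have := congr1 lpart e; have := congr1 rpart e.
  by rewrite !lpart_zcat !rpart_zcat => -> ->.
rewrite /powconv (@conv_seq _ _ _ _ _ _ U); last first.
  by move=> tau /allpairsP [[a b] /= [ha hb ->]]; rewrite allpairs_f // mem_undup.
rewrite (@conv_seq _ _ A _ _ _ (undup_uniq (ksupp A))); last by move=> tau; rewrite mem_undup.
rewrite (@conv_seq _ _ B _ _ _ (undup_uniq (ksupp B))); last by move=> tau; rewrite mem_undup.
rewrite big_allpairs_dep /= mulr_suml; apply: eq_bigr => a _.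
rewrite mulr_sumr; apply: eq_bigr => b _.
rewrite lpart_zcat rpart_zcat big_split_ord /=.
under eq_bigr do rewrite zcat_lshift.
under [X in _ * (_ * X) = _]eq_bigr do rewrite zcat_rshift.
by rewrite mulrACA.
Qed.

Definition VS (R : realType) (M : nat) (f : (int -> R) -> int -> R) : Prop :=
  exists F : forall k : nat, fkernel R k,
    forall x t, f x t = \sum_(k < M.+1) powconv (F k) x t.

Arguments VS {R}.

Lemma VS_ext (R : realType) M (f g : (int -> R) -> int -> R) :
  (forall x t, f x t = g x t) -> VS M f -> VS M g.
Proof. by move=> e [F hF]; exists F => x t; rewrite -e hF. Qed.

Lemma VS_mono (R : realType) M M' (f : (int -> R) -> int -> R) :
  (M <= M')%N -> VS M f -> VS M' f.
Proof.
move=> le [F hF].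
exists (fun k => if (k <= M)%N then F k else kzero R k) => x t.
rewrite hF (big_ord_widen _ (fun k => powconv (F k) x t) (le : (M.+1 <= M'.+1)%N)).
rewrite [RHS](bigID (fun k : 'I_M'.+1 => (k < M.+1)%N)) /=.
rewrite [X in _ = _ + X]big1 ?addr0.
  by apply: eq_bigr => i; rewrite ltnS => ->.
by move=> i; rewrite ltnS => /negbTE ->; rewrite powconv_zero.
Qed.

Arguments VS_ext {R M f g}. Arguments VS_mono {R M M' f}.

Definition ksingle (R : realType) j (G : fkernel R j) (k : nat) : fkernel R k :=
  match (j =P k) with
  | ReflectT e => eq_rect j (fkernel R) G k e
  | ReflectF _ => kzero R k
  end.

Arguments ksingle {R j}.

Lemma VS_single (R : realType) j (G : fkernel R j) :
  VS j (fun x t => powconv G x t).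
Proof.
exists (ksingle G) => x t.
rewrite big_ord_recr /= big1 ?add0r.
  rewrite /ksingle; case: (j =P j) => [e|//].
  by rewrite (eq_irrelevance e erefl).
move=> i _; rewrite /ksingle; case: (j =P i) => [e|_].
  by exfalso; have := ltn_ord i; rewrite -e ltnn.
exact: powconv_zero.
Qed.
Arguments VS_single {R j}.

Lemma VS_zero (R : realType) M : VS M (fun (x : int -> R) t => 0).
Proof. by exists (kzero R) => x t; rewrite big1 // => i _; rewrite powconv_zero. Qed.

Lemma VS_add (R : realType) M (f g : (int -> R) -> int -> R) :
  VS M f -> VS M g -> VS M (fun x t => f x t + g x t).
Proof.
move=> [F hF] [G hG]; exists (fun k => kadd (F k) (G k)) => x t.
by rewrite hF hG -big_split; apply: eq_bigr => i _; rewrite powconv_add.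
Qed.
Arguments VS_add {R M f g}.

Lemma VS_sum (R : realType) M (I : Type) (r : seq I) (f : I -> (int -> R) -> int -> R) :
  (forall i, VS M (f i)) -> VS M (fun x t => \sum_(i <- r) f i x t).
Proof.
move=> h; elim: r => [|i r IH].
  by apply: (VS_ext _ (VS_zero R M)) => x t; rewrite big_nil.
apply: (VS_ext _ (VS_add (h i) IH)) => x t; by rewrite big_cons.
Qed.

Lemma VS_mul (R : realType) M N (f g : (int -> R) -> int -> R) :
  VS M f -> VS N g -> VS (M + N) (fun x t => f x t * g x t).
Proof.
move=> [F hF] [G hG].
apply: (@VS_ext _ _ (fun x t => \sum_(k < M.+1) \sum_(m < N.+1)
   powconv (kmul (F k) (G m)) x t)).
  move=> x t; rewrite hF hG mulr_suml; apply: eq_bigr => k _.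
  by rewrite mulr_sumr; apply: eq_bigr => m _; rewrite powconv_mul.
apply: VS_sum => k; apply: VS_sum => m.
apply: (VS_mono _ (VS_single _)); apply: leq_add; rewrite -ltnS; exact: ltn_ord.
Qed.
Arguments VS_mul {R M N f g}.

Lemma VS_const (R : realType) (c : R) : VS 0 (fun x t => c).
Proof. by apply: (VS_ext _ (VS_single (kconst c))) => x t; rewrite powconv_const. Qed.

Lemma VS_shift (R : realType) M (f : (int -> R) -> int -> R) (c : int) :
  VS M f -> VS M (fun x t => f x (t - c)).
Proof.
move=> [F hF]; exists (fun k => kshift c (F k)) => x t.
by rewrite hF; apply: eq_bigr => i _; rewrite powconv_shift.
Qed.
Arguments VS_shift {R M f}.

Lemma VS_prod (R : realType) N j (g : 'I_j -> (int -> R) -> int -> R) :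
  (forall i, VS N (g i)) -> VS (j * N) (fun x t => \prod_(i < j) g i x t).
Proof.
elim: j g => [|j IH] g h.
  apply: (VS_mono (leq0n _)); apply: (VS_ext _ (VS_const R 1)) => x t.
  by rewrite big_ord0.
have le : (j * N + N <= j.+1 * N)%N by rewrite mulSnr.
apply: (VS_mono le).
apply: (VS_ext _ (VS_mul (IH (fun i => g (widen_ord (leqnSn j) i)) (fun i => h _)) (h ord_max))).
by move=> x t; rewrite big_ord_recr.
Qed.

Lemma VS_powconv (R : realType) N j (K : fkernel R j) (g : (int -> R) -> int -> R) :
  VS N g -> VS (j * N) (fun x t => powconv K (g x) t).
Proof.
move=> hg; apply: VS_sum => tau.
apply: (@VS_mul R 0 (j * N) (fun x t => kfun K tau)); first exact: VS_const.
by apply: (@VS_prod R N j (fun i x t => g x (t - tau i))) => i; apply: VS_shift.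
Qed.

Lemma VS_layer (R : realType) (o : nat -> nat) (H : nat -> forall j : nat, fkernel R j) n :
  VS (\prod_(1 <= l < n.+1) o l)%N (fun x t => layer_out o H x n t).
Proof.
elim: n => [|n IH].
  rewrite big_geq //; apply: (VS_ext _ (VS_single (kdelta R))) => x t.
  by rewrite powconv_delta.
rewrite big_nat_recr //=.
apply: VS_sum => j; apply: (VS_mono _ (@VS_powconv R _ _ (H n.+1 j) _ IH)).
by rewrite mulnC leq_mul2l -ltnS ltn_ord orbT.
Qed.

Theorem lemma16 (R : realType) (n : nat) (o : nat -> nat)
    (H : nat -> forall j : nat, fkernel R j) :
  (1 <= n)%N ->
  (forall l : nat, (1 <= l <= n)%N -> (1 <= o l)%N) ->
  exists F : forall k : nat, fkernel R k,
    forall (x : int -> R) (t : int),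
      layer_out o H x n t =
      \sum_(k < (\prod_(1 <= l < n.+1) o l)%N.+1) powconv (F k) x t.
Proof. by move=> _ _; exact: VS_layer. Qed.
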